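(* Let $\Omega$ be a distribution of $\Sigma$, $\mathsf{Obs}$ an observation function over $\Sigma$ with $\Omega\models\mathsf{Obs}$, and $(\sigma,b)\in\Sigma^\star\times\{+,-\}$ with $\sigma\notin\mathsf{Dom}(\mathsf{Obs})$ such that, with $\mathsf{Obs}'=\mathsf{Obs}\cup\{(\sigma,b)\}$, $\Omega\not\models\mathsf{Obs}'$. Then $\mathit{CED}(\Omega,\mathsf{Obs}')\ne\emptyset$, and every $(\sigma_N,P)\in\mathit{CED}(\Omega,\mathsf{Obs}')$ has the following form: - if $b=-$: $\sigma_N=\sigma$ and $P(\Sigma_i)\in\mathsf{Dom}(\mathsf{Obs})$ for all $\Sigma_i\in\Omega$; - if $b=+$: $\sigma_N\in\mathsf{Dom}(\mathsf{Obs})$, and with $S=\{\Sigma_i\in\Omega\mid P(\Sigma_i)=\sigma\}$ we have $S\ne\emptyset$ and $P(\Sigma_i)\in\mathsf{Dom}(\mathsf{Obs})$ for all $\Sigma_i\in\Omega\setminus S$.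
   Context: $\sigma|_{\Sigma'}$ is the projection of a word onto $\Sigma'$. A distribution of $\Sigma$ is a finite set of subsets of $\Sigma$ with union $\Sigma$. An observation function is a partial map $\mathsf{Obs}:\Sigma^\star\rightharpoonup\{+,-\}$ with finite domain, identified with its set of pairs $(\sigma,\mathsf{Obs}(\sigma))$. $\Omega\models\mathsf{Obs}$ means there exist $\mathcal L_{\Sigma_i}\subseteq\Sigma_i^\star$ ($\Sigma_i\in\Omega$) such that $\mathcal L=\{w\mid\forall\Sigma_i\in\Omega.\ w|_{\Sigma_i}\in\mathcal L_{\Sigma_i}\}$ satisfies $\sigma\in\mathcal L\iff\mathsf{Obs}(\sigma)=+$ for all $\sigma\in\mathsf{Dom}(\mathsf{Obs})$. A counter-example to $\Omega\models\mathsf{Obs}$ is a pair $(\sigma_N,P)$ with $\sigma_N\in\mathsf{Dom}(\mathsf{Obs})$, $\mathsf{Obs}(\sigma_N)=-$, and $P:\Omega\to\mathsf{Dom}(\mathsf{Obs})$ with $\mathsf{Obs}(P(\Sigma_i))=+$ and $\sigma_N|_{\Sigma_i}=P(\Sigma_i)|_{\Sigma_i}$ for all $\Sigma_i\in\Omega$; $\mathit{CED}(\Omega,\mathsf{Obs})$ is the set of these. *)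

(* Defs.v *)
From mathcomp Require Import all_boot finmap.
Set Implicit Arguments. Unset Strict Implicit. Unset Printing Implicit Defensive.
Local Open Scope fmap_scope.

(* Alphabet Sigma : finType; words are seq Sigma.
   Observations: bool with true = '+', false = '-'. *)

Definition proj (Sigma : finType) (S : {set Sigma}) (w : seq Sigma) : seq Sigma :=
  [seq a <- w | a \in S].

Definition distribution (Sigma : finType) (Om : {set {set Sigma}}) : Prop :=
  \bigcup_(S in Om) S = [set: Sigma].

Definition obsfun (Sigma : finType) := {fmap seq Sigma -> bool}.

Definition dlang (Sigma : finType) (Om : {set {set Sigma}})
  (L : {set Sigma} -> seq Sigma -> Prop) (w : seq Sigma) : Prop :=
  forall Si, Si \in Om -> L Si (proj Si w).

Definition models (Sigma : finType) (Om : {set {set Sigma}}) (Obs : obsfun Sigma) : Prop :=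
  exists L : {set Sigma} -> seq Sigma -> Prop,
    (forall Si w, L Si w -> all (fun a => a \in Si) w) /\
    forall s (hs : s \in domf Obs), dlang Om L s <-> Obs.[hs] = true.

(* (sN, P) is a counter-example to Om |= Obs, i.e. (sN,P) \in CED(Om,Obs).
   P : Om -> Dom(Obs) is represented by a total function whose values
   outside Om are irrelevant. *)
Definition is_CE (Sigma : finType) (Om : {set {set Sigma}}) (Obs : obsfun Sigma)
  (sN : seq Sigma) (P : {set Sigma} -> seq Sigma) : Prop :=
  Obs.[? sN] = Some false /\
  forall Si, Si \in Om ->
    Obs.[? P Si] = Some true /\ proj Si sN = proj Si (P Si).

(* Main.v *)
Require Import Defs.
From mathcomp Require Import all_boot finmap.
From Stdlib Require Import Classical_Prop.
Local Open Scope fmap_scope.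

Lemma fnd_dom {K : choiceType} {V : Type} {f : {fmap K -> V}} {k v} :
  f.[? k] = Some v -> k \in domf f.
Proof. by case: fndP. Qed.

Lemma CE_not_models (Sigma : finType) (Om : {set {set Sigma}}) (Obs : obsfun Sigma) sN P :
  is_CE Om Obs sN P -> ~ models Om Obs.
Proof.
move=> [HN HP] [L [_ HL]].
have hN := fnd_dom HN.
have : dlang Om L sN.
  move=> Si hSi; have [h1 h2] := HP Si hSi.
  have hk := fnd_dom h1.
  have := proj2 (HL _ hk); rewrite h2.
  move: h1; rewrite (in_fnd hk) => -[->] /(_ erefl); exact.
move/(proj1 (HL _ hN)); move: HN; rewrite (in_fnd hN) => -[->] //.
Qed.

Lemma not_models_CE (Sigma : finType) (Om : {set {set Sigma}}) (Obs : obsfun Sigma) :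
  ~ models Om Obs -> exists sN P, is_CE Om Obs sN P.
Proof.
move=> Hn.
pose xs : seq (seq Sigma) := domf Obs.
set L := fun (Si : {set Sigma}) (w : seq Sigma) =>
  exists k, Obs.[? k] = Some true /\ w = proj Si k.
have [s [hs [hd hf]]] : exists s (hs : s \in domf Obs), dlang Om L s /\ Obs.[hs] = false.
  apply: Classical_Prop.NNPP => Hc; apply: Hn; exists L; split.
    by move=> Si w [k [_ ->]]; apply: filter_all.
  move=> s hs; split.
    move=> hd; case E: (Obs.[hs]) => //; exfalso; apply: Hc; exists s, hs; done.
  move=> h Si _; exists s; by rewrite (in_fnd hs) h.
pose p Si := fun k => (Obs.[? k] == Some true) && (proj Si s == proj Si k).
exists s, (fun Si => nth [::] xs (find (p Si) xs)); split.
  by rewrite (in_fnd hs) hf.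
move=> Si hSi.
have : has (p Si) xs.
  have [k [hk hp]] := hd Si hSi; apply/hasP; exists k.
    exact: fnd_dom hk.
  by rewrite /p hk hp !eqxx.
by move/(nth_find [::]) => /andP [/eqP -> /eqP ->].
Qed.

Theorem mainTheorem14 (Sigma : finType) (Om : {set {set Sigma}})
  (Obs : obsfun Sigma) (s : seq Sigma) (b : bool) :
  distribution Om ->
  models Om Obs ->
  s \notin domf Obs ->
  ~ models Om Obs.[s <- b] ->
  (exists sN P, is_CE Om Obs.[s <- b] sN P) /\
  (forall sN P, is_CE Om Obs.[s <- b] sN P ->
     if b then
       sN \in domf Obs /\
       (exists2 Si, Si \in Om & P Si = s) /\
       (forall Si, Si \in Om -> P Si != s -> P Si \in domf Obs)
     else
       sN = s /\ (forall Si, Si \in Om -> P Si \in domf Obs)).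
Proof.
move=> _ Hm Hs Hn; split; first exact: not_models_CE.
move=> sN P [HN HP].
case: b Hn HN HP => Hn HN HP.
- rewrite fnd_set in HN; case: eqP HN => // hne HN.
  split; first exact: fnd_dom HN.
  split; last first.
    move=> Si hSi hne'; have [h1 _] := HP Si hSi.
    by rewrite fnd_set (negbTE hne') in h1; exact: fnd_dom h1.
  apply: Classical_Prop.NNPP => Hc; apply: (@CE_not_models _ Om Obs sN P _ Hm).
  split => // Si hSi; have [h1 h2] := HP Si hSi.
  split => //; rewrite fnd_set in h1; case: eqP h1 => // e; exfalso; apply: Hc; by exists Si.
- have hPs : forall Si, Si \in Om -> P Si != s /\ Obs.[? P Si] = Some true.
    move=> Si hSi; have [h1 _] := HP Si hSi.
    by rewrite fnd_set in h1; case: eqP h1.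
  rewrite fnd_set in HN; case: eqP HN => [//|hne HN].
  + split=> // Si hSi; exact: fnd_dom (proj2 (hPs Si hSi)).
  + exfalso; apply: (@CE_not_models _ Om Obs sN P _ Hm); split => // Si hSi.
    by split; [exact: proj2 (hPs Si hSi) | exact: proj2 (HP Si hSi)].
Qed.
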